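(* Let $\mathcal H$ be an $As^c$-$Mag$-bialgebra. Then $\mathrm{Prim}\,\mathcal H$ is closed under the operations $\mu^n_i$ for all $n\ge3$ and $1\le i\le n-2$: if $x_1,\dots,x_n\in\mathrm{Prim}\,\mathcal H$ then $\mu^n_i(x_1,\dots,x_n)\in\mathrm{Prim}\,\mathcal H$.
   Context: An $As^c$-$Mag$-bialgebra is a vector space $\mathcal H$ over a field with a bilinear product $\cdot$ (not assumed associative) with two-sided unit $1$ and a coassociative counital coproduct $\Delta$ with $\Delta(1)=1\otimes1$ and $\Delta(x\cdot y)=\Delta(x)\cdot(1\otimes y)+(x\otimes1)\cdot\Delta(y)-x\otimes y$, the product on $\mathcal H\otimes\mathcal H$ being componentwise. $\mathrm{Prim}\,\mathcal H$ is the set of $x$ in the kernel of the counit with $\Delta(x)=x\otimes1+1\otimes x$. $\omega^1(x)=x$, $\omega^n(x_1,\dots,x_n)=\omega^{n-1}(x_1,\dots,x_{n-1})\cdot x_n$; $as(x,y,z)=(x\cdot y)\cdot z-x\cdot(y\cdot z)$; $\mu^3_1=as$; $\mu^n_1(x_1,\dots,x_n)=as(x_1,\omega^{n-2}(x_2,\dots,x_{n-1}),x_n)$ for $n\ge4$; $\mu^4_2(x_1,\dots,x_4)=as(x_1,x_2,x_3\cdot x_4)-as(x_1,x_2,x_3)\cdot x_4$; for $n\ge4$ and $2\le i\le n-2$, $\mu^n_i(x_1,\dots,x_n)=\mu^4_2(x_1,\omega^{n-i-1}(x_2,\dots,x_{n-i}),\omega^{i-1}(x_{n-i+1},\dots,x_{n-1}),x_n)$.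 *)

(* Defs.v *)
From mathcomp Require Import all_boot all_order all_algebra.
Set Implicit Arguments. Unset Strict Implicit. Unset Printing Implicit Defensive.
Import GRing.Theory.
Local Open Scope ring_scope.

(* Tensors in H <x> H are represented by finite sequences of pairs
   [(a_1,b_1);...;(a_k,b_k)] standing for sum_i a_i <x> b_i.  Two such
   representatives are identified when they agree as bilinear functionals on
   H_dual x H_dual; over a field the canonical map H <x> H -> Bil(H_dual,H_dual) is
   injective, so this is exactly equality in H <x> H.  Same for H <x> H <x> H. *)

Section Bialg.
Variables (F : fieldType) (H : lmodType F).

Definition is_functional (f : H -> F) : Prop :=
  forall (a : F) (x y : H), f (a *: x + y) = a * f x + f y.

Definition teq2 (s t : seq (H * H)) : Prop :=
  forall f g, is_functional f -> is_functional g ->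
    \sum_(p <- s) f p.1 * g p.2 = \sum_(p <- t) f p.1 * g p.2.

Definition teq3 (s t : seq (H * H * H)) : Prop :=
  forall f g h, is_functional f -> is_functional g -> is_functional h ->
    \sum_(p <- s) f p.1.1 * g p.1.2 * h p.2
    = \sum_(p <- t) f p.1.1 * g p.1.2 * h p.2.

Variables (mul : H -> H -> H) (one : H).

Definition tmul (s t : seq (H * H)) : seq (H * H) :=
  [seq (mul p.1 q.1, mul p.2 q.2) | p <- s, q <- t].

Variables (Delta : H -> seq (H * H)) (eps : H -> F).

Definition AscMagBialgebra : Prop :=
  (forall a x y z, mul (a *: x + y) z = a *: mul x z + mul y z) /\
  (forall a x y z, mul z (a *: x + y) = a *: mul z x + mul z y) /\
  (forall x, mul one x = x) /\ (forall x, mul x one = x) /\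
  (forall a x y, teq2 (Delta (a *: x + y))
                      ([seq (a *: p.1, p.2) | p <- Delta x] ++ Delta y)) /\
  (* Delta coassociative: (Delta <x> id) Delta = (id <x> Delta) Delta *)
  (forall x, teq3 (flatten [seq [seq (q.1, q.2, p.2) | q <- Delta p.1] | p <- Delta x])
                  (flatten [seq [seq (p.1, q.1, q.2) | q <- Delta p.2] | p <- Delta x])) /\
  is_functional eps /\
  (forall x, \sum_(p <- Delta x) eps p.1 *: p.2 = x) /\
  (forall x, \sum_(p <- Delta x) eps p.2 *: p.1 = x) /\
  teq2 (Delta one) [:: (one, one)] /\
  (* Delta(x.y) = Delta(x).(1 <x> y) + (x <x> 1).Delta(y) - x <x> y *)
  (forall x y, teq2 (Delta (mul x y))
                    (tmul (Delta x) [:: (one, y)] ++ tmul [:: (x, one)] (Delta y)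
                          ++ [:: (- x, y)])).

Definition Prim (x : H) : Prop :=
  eps x = 0 /\ teq2 (Delta x) [:: (x, one); (one, x)].

(* arguments are x_1, ..., x_n given as x 1, ..., x n *)
Variable x : nat -> H.

(* omg s m = omega^m(x_s, ..., x_{s+m-1}) for m >= 1 *)
Fixpoint omg (s m : nat) : H :=
  match m with
  | 0 => one (* unused *)
  | m'.+1 => match m' with
             | 0 => x s
             | _ => mul (omg s m') (x (s + m'))
             end
  end.

Definition asc (a b c : H) : H := mul (mul a b) c - mul a (mul b c).

Definition mu42 (a b c d : H) : H := asc a b (mul c d) - mul (asc a b c) d.

(* mu n i for n >= 3, 1 <= i <= n-2.  For i = 1, n = 3 this is as(x1,x2,x3)
   since omega^1(x_2) = x_2. *)
Definition mu (n i : nat) : H :=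
  if i == 1%N then asc (x 1) (omg 2 (n - 2)) (x n)
  else mu42 (x 1) (omg 2 (n - i - 1)) (omg (n - i + 1) (i - 1)) (x n).

End Bialg.

(* Main.v *)
Require Import Defs.
From mathcomp Require Import all_boot all_order all_algebra.
From mathcomp Require Import ring zify.
Set Implicit Arguments. Unset Strict Implicit. Unset Printing Implicit Defensive.
Import GRing.Theory.
Local Open Scope ring_scope.

Section Proof.
Variables (F : fieldType) (H : lmodType F) (mul : H -> H -> H) (one : H)
  (Delta : H -> seq (H * H)) (eps : H -> F).
Hypothesis hyp : AscMagBialgebra mul one Delta eps.

Local Notation fn f := (@is_functional F H f).

Lemma fun0 f : fn f -> f 0 = 0.
Proof. move=> Hf; have h := Hf 1 0 0; rewrite scale1r addr0 mul1r in h.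
by apply: (addrI (f 0)); rewrite -h addr0. Qed.
Lemma funD f x y : fn f -> f (x + y) = f x + f y.
Proof. by move=> Hf; rewrite -[x]scale1r Hf mul1r scale1r. Qed.
Lemma funZ f a x : fn f -> f (a *: x) = a * f x.
Proof. by move=> Hf; rewrite -[a *: x]addr0 Hf fun0 // addr0. Qed.
Lemma funB f x y : fn f -> f (x - y) = f x - f y.
Proof. by move=> Hf; rewrite funD // -scaleN1r funZ // mulN1r. Qed.
Lemma fun_sum f (s : seq (H * H)) (G : H * H -> H) : fn f ->
  f (\sum_(p <- s) G p) = \sum_(p <- s) f (G p).
Proof. move=> Hf; elim: s => [|p s IH]; first by rewrite !big_nil fun0.
by rewrite !big_cons funD // IH. Qed.

Lemma fun_mull a f : fn f -> fn (fun u => f (mul a u)).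
Proof. case: hyp => _ [hr _] Hf c x y /=; by rewrite hr Hf. Qed.
Lemma fun_mulr b f : fn f -> fn (fun u => f (mul u b)).
Proof. case: hyp => hl _ Hf c x y /=; by rewrite hl Hf. Qed.

Definition D z (f g : H -> F) := \sum_(p <- Delta z) f p.1 * g p.2.
Definition E z (f g : H -> F) := D z f g - f z * g one - f one * g z.

Lemma D_lin a x y f g : fn f -> fn g -> D (a *: x + y) f g = a * D x f g + D y f g.
Proof.
case: hyp => _ [_ [_ [_ [hD _]]]] Hf Hg.
rewrite /D (hD a x y f g Hf Hg) big_cat big_map /=; congr (_ + _).
rewrite mulr_sumr; apply: eq_bigr => p _; by rewrite funZ // mulrA.
Qed.

Lemma D_sub x y f g : fn f -> fn g -> D (x - y) f g = D x f g - D y f g.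
Proof. move=> Hf Hg; rewrite addrC -scaleN1r D_lin //; ring. Qed.

Lemma D_mul x y f g : fn f -> fn g ->
  D (mul x y) f g = D x f (fun u => g (mul u y)) + D y (fun u => f (mul x u)) g
                    - f x * g y.
Proof.
case: hyp => _ [_ [hu1 [hu2 [_ [_ [_ [_ [_ [_ hp]]]]]]]]] Hf Hg.
rewrite /D (hp x y f g Hf Hg) !big_cat /= /tmul !big_allpairs_dep /=.
rewrite big_cons big_nil addr0 big_map /=.
rewrite (eq_bigr (fun p => f p.1 * g (mul p.2 y))); last first.
  by move=> p _; rewrite big_seq1 /= hu2.
under [X in _ + (X + _) = _]eq_bigr => p _ do rewrite hu1.
rewrite -scaleN1r funZ //. ring.
Qed.

Lemma D_eps_l z g : fn g -> D z eps g = g z.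
Proof.
case: hyp => _ [_ [_ [_ [_ [_ [_ [hc1 _]]]]]]] Hg.
rewrite -{2}(hc1 z) fun_sum //; apply: eq_bigr => p _; by rewrite funZ.
Qed.

Lemma D_eps_r z f : fn f -> D z f eps = f z.
Proof.
case: hyp => _ [_ [_ [_ [_ [_ [_ [_ [hc2 _]]]]]]]] Hf.
rewrite -{2}(hc2 z) fun_sum //; apply: eq_bigr => p _; by rewrite funZ // mulrC.
Qed.

Lemma feps : fn eps.
Proof. by case: hyp => _ [_ [_ [_ [_ [_ [he _]]]]]]. Qed.

Lemma eps_mul a b : eps (mul a b) = eps a * eps b.
Proof.
have h := D_mul a b feps feps.
rewrite (D_eps_l (mul a b) feps) (D_eps_l _ (fun_mulr b feps)) (D_eps_r _ (fun_mull a feps)) in h.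
move: h; set X := eps (mul a b); set Y := eps a * eps b => h.
suff: X - Y = 0 by move/eqP; rewrite subr_eq0 => /eqP.
have e : X - Y = (X + X - Y) - X by ring.
by rewrite e -h subrr.
Qed.

Lemma E_sub x y f g : fn f -> fn g -> E (x - y) f g = E x f g - E y f g.
Proof. move=> Hf Hg; rewrite /E D_sub // !funB //; ring. Qed.

Lemma E_mul a b f g : fn f -> fn g ->
  E (mul a b) f g = E a f (fun u => g (mul u b)) + E b (fun u => f (mul a u)) g
                    + f a * g b.
Proof.
case: hyp => _ [_ [hu1 [hu2 _]]] Hf Hg.
rewrite /E D_mul // hu1 hu2; ring.
Qed.

Definition PrimE a := eps a = 0 /\ forall f g, fn f -> fn g -> E a f g = 0.

Lemma PrimP a : Prim one Delta eps a <-> PrimE a.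
Proof.
split=> [[h1 h2]|[h1 h2]]; split=> // f g Hf Hg.
  rewrite /E /D (h2 f g Hf Hg) big_cons big_seq1 /=; ring.
have := h2 f g Hf Hg; rewrite /E /D big_cons big_seq1 /= => e.
by apply/eqP; rewrite -subr_eq0; apply/eqP; rewrite -[RHS]e; ring.
Qed.

Lemma fun_mulr2 b w f : fn f -> fn (fun u => f (mul (mul u b) w)).
Proof. by move=> Hf; apply: (fun_mulr b (fun_mulr w Hf)). Qed.
Lemma fun_mull2 a b f : fn f -> fn (fun u => f (mul a (mul b u))).
Proof. by move=> Hf; apply: (fun_mull b (fun_mull a Hf)). Qed.

Ltac fnt := repeat first [ assumption | apply: fun_mull2 | apply: fun_mulr2 | apply: fun_mull | apply: fun_mulr ].

Lemma E_asc a b w f g : PrimE a -> fn f -> fn g ->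
  E (asc mul a b w) f g = E w (fun u => f (mul (mul a b) u)) g
                          - E w (fun u => f (mul a (mul b u))) g.
Proof.
move=> [_ Ea] Hf Hg; rewrite /asc E_sub; try fnt.
rewrite !E_mul; try fnt.
rewrite !Ea; try fnt.
ring.
Qed.

Lemma eps_asc a b c : eps (asc mul a b c) = 0.
Proof. rewrite /asc (funB _ _ feps) !eps_mul; ring. Qed.

Lemma asc_prim a b c : PrimE a -> PrimE c -> PrimE (asc mul a b c).
Proof.
move=> Pa [_ Ec]; split; first exact: eps_asc.
move=> f g Hf Hg; rewrite E_asc // !Ec; try fnt; ring.
Qed.

Lemma mu42_prim a b c d : PrimE a -> PrimE d -> PrimE (mu42 mul a b c d).
Proof.
move=> Pa [ed Ed]; split.
  by rewrite /mu42 (funB _ _ feps) eps_mul !eps_asc; ring.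
move=> f g Hf Hg; rewrite /mu42 E_sub; try fnt.
rewrite E_asc //. rewrite !E_mul; try fnt.
rewrite E_asc //; try fnt.
rewrite !Ed; try fnt.
rewrite /asc (funB _ _ Hf). ring.
exact: (fun_mull c (fun_mull2 a b Hf)).
Qed.

End Proof.

Theorem proposition2p8 (F : fieldType) (H : lmodType F)
  (mul : H -> H -> H) (one : H) (Delta : H -> seq (H * H)) (eps : H -> F) :
  AscMagBialgebra mul one Delta eps ->
  forall (n i : nat) (x : nat -> H),
    (3 <= n)%N -> (1 <= i <= n - 2)%N ->
    (forall k, (1 <= k <= n)%N -> Prim one Delta eps (x k)) ->
    Prim one Delta eps (mu mul one x n i).
Proof.
move=> hyp n i x hn hi hx.
have P1 : PrimE one Delta eps (x 1%N) by apply/PrimP; apply: hx; lia.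
have Pn : PrimE one Delta eps (x n) by apply/PrimP; apply: hx; lia.
apply/PrimP; rewrite /mu; case: ifP => _.
  exact: asc_prim hyp (x 1%N) (omg mul one x 2 (n - 2)) (x n) P1 Pn.
by have := mu42_prim hyp (omg mul one x 2 (n - i - 1)) (omg mul one x (n - i + 1) (i - 1)) P1 Pn.
Qed.
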